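(* Let $m\ge 0$, $n=3m+2$, and $t\ge 1$. Then there is a homotopy equivalence $I(G_{n,t})\simeq I(G_{n,t}\setminus a_{t-1})$.
   Context: For a finite simple graph $G$, $I(G)$ is its independence complex (simplicial complex on $V(G)$ whose simplices are the independent sets); $G\setminus v$ is the induced subgraph on $V(G)\setminus\{v\}$. For integers $n\ge 2$, $t\ge 0$, the graph $G_{n,t}$ has vertex set $\{a_0,\dots,a_t\}\cup\{b_{i,j},c_{i,j}: 1\le i\le t,\ 1\le j\le n-1\}$, and its edges are exactly: $b_{i,j}\sim b_{i,j+1}$ and $c_{i,j}\sim c_{i,j+1}$ for $1\le i\le t$, $1\le j\le n-2$; $b_{i,n-1}\sim b_{i+1,1}$ and $c_{i,n-1}\sim c_{i+1,1}$ for $1\le i\le t-1$; and $a_{i-1}\sim b_{i,1}$, $a_{i-1}\sim c_{i,1}$, $a_i\sim b_{i,n-1}$, $a_i\sim c_{i,n-1}$ for $1\le i\le t$. *)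

(* Defs.v *)
From HB Require Import structures.
From mathcomp Require Import all_boot all_order all_algebra.
From mathcomp Require Import all_classical all_reals.
From mathcomp Require Import topology_structure product_topology subtype_topology subspace_topology
  function_spaces topology normedtype.
Set Implicit Arguments. Unset Strict Implicit. Unset Printing Implicit Defensive.
Import Order.TTheory GRing.Theory Num.Theory.
Import numFieldNormedType.Exports.
Local Open Scope classical_set_scope.
Local Open Scope ring_scope.

(* A finite simple graph is a symmetric irreflexive relation e on a finType. *)

Definition independent {T : finType} (e : rel T) (S : {set T}) : bool :=
  [forall x in S, forall y in S, ~~ e x y].

Definition del_vertex {T : finType} (e : rel T) (v : T) : rel {x : T | x != v} :=
  fun x y => e (val x) (val y).

(* Geometric realization of a simplicial complex on the finite vertex set T,
   given by its (downward-closed) family of faces [K]: the points of the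
   standard simplex in R^T (with the product topology) whose support is a face. *)
Definition realization (R : realType) {T : finType} (K : pred {set T})
  : set {ptws T -> R} :=
  [set f : {ptws T -> R} | (forall v, 0 <= f v) /\ \sum_(v : T) f v = 1
                           /\ K (finset (fun v => f v != 0))].
Arguments realization R {T} K.

Definition indep_complex_space (R : realType) {T : finType} (e : rel T) : topologicalType :=
  set_type (realization R (independent e)).

Definition unit_cyl (R : realType) (X : Type) : set (R * X) :=
  [set p | 0 <= p.1 <= 1].


Definition homotopic (R : realType) {X Y : topologicalType} (h k : X -> Y) : Prop :=
  exists H : R * X -> Y,
    {within @unit_cyl R X, continuous H} /\
    (forall x, H (0, x) = h x) /\ (forall x, H (1, x) = k x).
Arguments homotopic R {X Y} h k.

Definition homotopy_equivalent (R : realType) (X Y : topologicalType) : Prop :=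
  exists (f : X -> Y) (g : Y -> X),
    continuous f /\ continuous g /\
    homotopic R (g \o f) idfun /\ homotopic R (f \o g) idfun.

(* The graph G_{n,t}.  Vertex type:
   inl k          = a_k              (0 <= k <= t)
   inr (i, j, true)  = b_{i+1, j+1}  (0 <= i < t, 0 <= j < n-1)
   inr (i, j, false) = c_{i+1, j+1}                                   *)
Definition Gvert (n t : nat) : finType := ('I_t.+1 + ('I_t * 'I_n.-1 * bool))%type.

(* one orientation of each edge *)
Definition Gadj (n t : nat) (u w : Gvert n t) : bool :=
  match u, w with
  | inr (i, j, s), inr (i', j', s') =>
      (s == s') &&
      (((i == i' :> nat) && (j'== j.+1 :> nat)) ||
       ((i' == i.+1 :> nat) && (j == (n - 2)%N :> nat) && (j' == 0 :> nat)))
  | inl k, inr (i, j, _) =>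
      ((k == i :> nat) && (j == 0 :> nat)) ||
      ((k == i.+1 :> nat) && (j == (n - 2)%N :> nat))
  | _, _ => false
  end.

Definition Gedge (n t : nat) : rel (Gvert n t) :=
  fun u w => Gadj u w || Gadj w u.

Definition Ga (n t k : nat) : Gvert n t := inl (inord k).
Arguments Gadj : clear implicits.
Arguments Gedge : clear implicits.
Arguments Ga : clear implicits.
Arguments del_vertex {T} e v.

(* Main.v *)
Require Import Defs.
From HB Require Import structures.
From mathcomp Require Import all_boot all_order all_algebra.
From mathcomp Require Import all_classical all_reals.
From mathcomp Require Import topology_structure product_topology subtype_topology subspace_topology
  function_spaces topology normedtype.
From mathcomp Require Import zify ring lra.
Set Implicit Arguments. Unset Strict Implicit. Unset Printing Implicit Defensive.
Import Order.TTheory GRing.Theory Num.Theory.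
Import numFieldNormedType.Exports.
Local Open Scope classical_set_scope.
Local Open Scope ring_scope.
Section Gen.
Variables (R : realType) (T : finType).

Definition inR (f : T -> R) := (forall z, 0 <= f z) /\ \sum_z f z = 1.
Definition indep_fun (r : rel T) (f : T -> R) :=
  forall a b, f a != 0 -> f b != 0 -> ~~ r a b.

Lemma realizationP (r : rel T) (f : T -> R) :
  realization R (independent r) f <-> inR f /\ indep_fun r f.
Proof.
rewrite /realization /inR /indep_fun /independent /=; split.
  move=> [h0 [h1 /forall_inP h2]]; split => // a b fa fb.
  have := h2 a; rewrite finset.in_set => /(_ fa) /forall_inP /(_ b); rewrite finset.in_set.
  exact.
move=> [[h0 h1] h2]; split => //; split => //.
apply/forall_inP => a; rewrite finset.in_set => fa; apply/forall_inP => b.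
rewrite finset.in_set => fb; exact: h2.
Qed.

Lemma sum_delta (a : T) : \sum_(z : T) ((z == a)%:R : R) = 1.
Proof.
rewrite (bigD1 a) //= eqxx big1 ?addr0 // => z /negbTE -> //.
Qed.

Lemma add_indep (r : rel T) (f g : T -> R) (u v x : T) :
  (forall a b, r a b = r b a) -> ~~ r u u ->
  (forall y, r u y -> r v y || r x y) ->
  indep_fun r f ->
  (forall z, g z != 0 -> f z != 0 \/ (z = u /\ f v != 0 /\ f x != 0)) ->
  indep_fun r g.
Proof.
move=> rs ruu hu hf hg a b ga gb.
have key : forall y, f v != 0 -> f x != 0 -> f y != 0 -> ~~ r u y.
  move=> y fv fx fy; apply/negP => /hu /orP [].
    by apply/negP; apply: hf.
  by apply/negP; apply: hf.
case: (hg a ga) => [fa | [-> [fv fx]]]; case: (hg b gb) => [fb | [-> [fv' fx']]].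
- exact: hf.
- by rewrite rs; apply: key.
- exact: key.
- exact: ruu.
Qed.

Definition stepf (v : T) (lam : R) (x u : T) (f : T -> R) : T -> R :=
  fun z => f z + lam * Num.min (f v) (f x) * ((z == u)%:R *+ 2 - (z == v)%:R - (z == x)%:R).

Definition foldf (v : T) (lam : R) (w : T) (f : T -> R) : T -> R :=
  fun z => f z + lam * f v * ((z == w)%:R - (z == v)%:R).

Lemma step_ok (r : rel T) v lam x u (f : T -> R) :
  (forall a b, r a b = r b a) -> 0 <= lam <= 1 -> u != v -> u != x -> x != v ->
  ~~ r u u -> (forall y, r u y -> r v y || r x y) -> inR f -> indep_fun r f ->
  [/\ inR (stepf v lam x u f), indep_fun r (stepf v lam x u f) &
     (lam = 1 -> stepf v lam x u f v = 0 \/ stepf v lam x u f x = 0)].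
Proof.
move=> rs /andP[l0 l1] uv ux xv ruu hu [f0 f1] hf.
set c := lam * Num.min (f v) (f x).
have m0 : 0 <= Num.min (f v) (f x) by rewrite le_min !f0.
have c0 : 0 <= c by rewrite mulr_ge0.
have cm : c <= Num.min (f v) (f x) by rewrite /c ler_piMl.
have cv : c <= f v by apply: (le_trans cm); rewrite ge_min lexx.
have cx : c <= f x by apply: (le_trans cm); rewrite ge_min lexx orbT.
have vu : v != u by rewrite eq_sym.
have vx : v != x by rewrite eq_sym.
have xu : x != u by rewrite eq_sym.
have gE : forall z, stepf v lam x u f z = if z == u then f u + c *+ 2
   else if z == v then f v - c else if z == x then f x - c else f z.
  move=> z; rewrite /stepf -/c.
  case: (eqVneq z u) => [->|zu]; first by rewrite (negbTE uv) (negbTE ux) /=; ring.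
  case: (eqVneq z v) => [->|zv]; first by rewrite (negbTE vx) /=; ring.
  case: (eqVneq z x) => [->|zx]; first by rewrite /=; ring.
  by rewrite /=; ring.
split.
- split.
    move=> z; rewrite gE; case: ifP => _; first by rewrite addr_ge0 ?f0 // mulrn_wge0.
    case: ifP => _; first by rewrite subr_ge0.
    by case: ifP => _; rewrite ?subr_ge0 ?f0.
  rewrite /stepf big_split /= f1 -big_distrr /= sumrB sumrB sumrMnl !sum_delta.
  by ring.
- apply: (add_indep rs ruu hu hf) => z; rewrite gE.
  have cpos : c != 0 -> f v != 0 /\ f x != 0.
    move=> cn0; have cp : 0 < c by rewrite lt_def cn0 c0.
    by split; apply/negP => /eqP h; [move: cv|move: cx]; rewrite h; apply/negP; rewrite -ltNge.
  case: (eqVneq z u) => [->|zu].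
    case: (eqVneq (f u) 0) => [fu0|]; last by left.
    rewrite fu0 add0r => h; right; split => //; apply: cpos.
    by apply: contraNneq h => ->; rewrite mul0rn.
  case: (eqVneq z v) => [->|zv].
    rewrite ?(negbTE vu) ?eqxx.
    case: (eqVneq (f v) 0) => [fv0|]; last by left.
    have -> : c = 0 by apply/le_anti; rewrite c0 -fv0 cv.
    by rewrite fv0 subrr eqxx.
  case: (eqVneq z x) => [->|zx].
    rewrite ?(negbTE xu) ?(negbTE xv) ?eqxx.
    case: (eqVneq (f x) 0) => [fx0|]; last by left.
    have -> : c = 0 by apply/le_anti; rewrite c0 -fx0 cx.
    by rewrite fx0 subrr eqxx.
  rewrite ?(negbTE zu) ?(negbTE zv) ?(negbTE zx).
  by left.
- move=> l1'; rewrite !gE (negbTE vu) (negbTE xu) eqxx (negbTE xv) eqxx /c l1' mul1r.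
  case: (leP (f v) (f x)) => h.
    by left; rewrite subrr.
  by right; rewrite subrr.
Qed.

Lemma fold_ok (r : rel T) v lam w (f : T -> R) :
  (forall a b, r a b = r b a) -> 0 <= lam <= 1 -> w != v ->
  ~~ r w w -> (forall y, r w y -> r v y) -> inR f -> indep_fun r f ->
  [/\ inR (foldf v lam w f), indep_fun r (foldf v lam w f) &
     (lam = 1 -> foldf v lam w f v = 0)].
Proof.
move=> rs /andP[l0 l1] wv rww hw [f0 f1] hf.
set c := lam * f v.
have c0 : 0 <= c by rewrite mulr_ge0.
have cv : c <= f v by rewrite /c ler_piMl.
have vw : v != w by rewrite eq_sym.
have gE : forall z, foldf v lam w f z = if z == w then f w + c
   else if z == v then f v - c else f z.
  move=> z; rewrite /foldf -/c.
  case: (eqVneq z w) => [->|zw]; first by rewrite ?(negbTE wv) /=; ring.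
  case: (eqVneq z v) => [->|zv]; first by rewrite /=; ring.
  by rewrite /=; ring.
split.
- split.
    move=> z; rewrite gE; case: ifP => _; first by rewrite addr_ge0 ?f0.
    by case: ifP => _; rewrite ?subr_ge0 ?f0.
  rewrite /foldf big_split /= f1 -big_distrr /= sumrB !sum_delta.
  by ring.
- have hw' : forall y, r w y -> r v y || r v y by move=> y /hw ->.
  apply: (add_indep rs rww hw' hf) => z; rewrite gE.
  have cpos : c != 0 -> f v != 0.
    move=> cn0; have cp : 0 < c by rewrite lt_def cn0 c0.
    by apply/negP => /eqP h; move: cv; rewrite h; apply/negP; rewrite -ltNge.
  case: (eqVneq z w) => [->|zw].
    case: (eqVneq (f w) 0) => [fu0|]; last by left.
    rewrite fu0 add0r => h; right; split => //; have := cpos h; by [].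
  case: (eqVneq z v) => [->|zv].
    rewrite ?(negbTE vw) ?eqxx.
    case: (eqVneq (f v) 0) => [fv0|]; last by left.
    have -> : c = 0 by apply/le_anti; rewrite c0 -fv0 cv.
    by rewrite fv0 subrr eqxx.
  by left.
- move=> l1'; rewrite !gE ?(negbTE vw) eqxx /c l1' mul1r.
  by rewrite subrr.
Qed.
End Gen.

Section Cont.
Variables (R : realType) (Z : topologicalType).
Implicit Types f g : Z -> R.
Lemma contD f g : continuous f -> continuous g -> continuous (fun z => f z + g z).
Proof. by move=> cf cg x; exact: (continuousD (cf x) (cg x)). Qed.
Lemma contB f g : continuous f -> continuous g -> continuous (fun z => f z - g z).
Proof. by move=> cf cg x; exact: (continuousB (cf x) (cg x)). Qed.
Lemma contM f g : continuous f -> continuous g -> continuous (fun z => f z * g z).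
Proof. by move=> cf cg x; exact: (continuousM (cf x) (cg x)). Qed.
Lemma contC (c : R) : continuous (fun _ : Z => c).
Proof. by move=> x; apply: cvg_cst. Qed.
Lemma contMin f g : continuous f -> continuous g -> continuous (fun z => Num.min (f z) (g z)).
Proof. move=> cf cg x; have := @continuous_min R Z f g x (cf x) (cg x). exact. Qed.
Lemma contMax f g : continuous f -> continuous g -> continuous (fun z => Num.max (f z) (g z)).
Proof. move=> cf cg x; have := @continuous_max R Z f g x (cf x) (cg x). exact. Qed.
End Cont.
Lemma cont_proj2 (R : realType) (T : finType) (z : T) :
  continuous (fun q : R * {ptws T -> R} => q.2 z).
Proof.
move=> q; apply: (@continuous_comp _ _ _ snd (fun f : {ptws T -> R} => f z)).
  exact: cvg_snd.
exact: (@proj_continuous T (fun _ => R) z).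
Qed.
Lemma cont_fst (R : realType) (T : finType) :
  continuous (fun q : R * {ptws T -> R} => q.1).
Proof. move=> q; exact: cvg_fst. Qed.
Lemma cont_val (R : realType) (T : finType) (A : set {ptws T -> R}) :
  continuous (set_val : set_type A -> {ptws T -> R}).
Proof. exact: initial_continuous. Qed.
Lemma cont_into (R : realType) (T : finType) (A : set {ptws T -> R}) (Z : topologicalType)
  (h : Z -> set_type A) : continuous (fun z => set_val (h z)) -> continuous h.
Proof. move=> ch; exact: (@continuous_comp_initial _ _ _ set_val h ch). Qed.
Lemma sum_subv (R : realType) (T : finType) (v : T) (F : T -> R) :
  \sum_(w' : {x : T | x != v}) F (val w') = \sum_(z | z != v) F z.
Proof.
symmetry; rewrite (reindex_omap (val : {x : T | x != v} -> T) insub); last first.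
  by move=> i iv; rewrite insubT.
by apply: eq_bigl=> -[i iv] /=; rewrite insubT ?iv /= ?eqxx.
Qed.

Lemma ptws_continuous (R : realType) (Z : topologicalType) (I : Type) (g : Z -> {ptws I -> R}) :
  (forall i, continuous (fun z => g z i)) -> continuous g.
Proof.
move=> cg x; apply/cvg_sup.
move=> i A /= [B [[C oC <-] /= Cgx] BA].
rewrite nbhs_simpl /=.
apply: (@filterS _ _ _ ((fun z => g z i) @^-1` C)).
  by move=> z /= Cz; apply: BA.
apply: cg; exact: open_nbhs_nbhs.
Qed.

Section Chain.
Variables (R : realType) (T : finType) (e : rel T) (v : T).
Hypothesis esym : forall a b, e a b = e b a.
Variables (xs us : nat -> T) (K : nat) (w : T).

Fixpoint ek (k : nat) (a b : T) : bool :=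
  match k with
  | 0 => e a b
  | k'.+1 => [|| ek k' a b, (a == v) && (b == xs k'.+1) | (b == v) && (a == xs k'.+1)]
  end.


Lemma ek_vx k j : (0 < j <= k)%N -> ek k v (xs j).
Proof.
elim: k => [|k IH] /=; first by move=> h; exfalso; lia.
move=> h; case: (eqVneq j k.+1) => [->|hj]; first by rewrite !eqxx /= orbT.
by rewrite IH //; lia.
Qed.

Lemma ek_nv k a b : a != v -> (forall j, (0 < j <= k)%N -> a != xs j) -> ek k a b -> e a b.
Proof.
move=> av hx; elim: k hx => [|k IH] hx //=.
case/or3P => [|/andP [/eqP ea _]|/andP [_ /eqP ea]].
- by apply: IH => j hj; apply: hx; lia.
- by rewrite ea eqxx in av.
- by have := hx k.+1; rewrite ea eqxx => /(_ _) /negP; case; lia.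
Qed.

Hypothesis hstep : forall k, (k < K)%N ->
  [/\ us k.+1 != v, us k.+1 != xs k.+1, xs k.+1 != v, ~~ ek k (us k.+1) (us k.+1) &
      forall y, ek k (us k.+1) y -> ek k v y || ek k (xs k.+1) y].
Hypothesis hfin : [/\ w != v, ~~ ek K w w & forall y, ek K w y -> ek K v y].

Definition clamp (a : R) : R := Num.min 1 (Num.max 0 a).
Definition lamt (s : R) (j : nat) : R := clamp (K.+1%:R * s - (j.-1)%:R).

Fixpoint chain (s : R) (k : nat) (f : T -> R) : T -> R :=
  match k with
  | 0 => f
  | k'.+1 => stepf v (lamt s k'.+1) (xs k'.+1) (us k'.+1) (chain s k' f)
  end.

Definition full (s : R) (f : T -> R) : T -> R := foldf v (lamt s K.+1) w (chain s K f).

Lemma ek_sym k a b : ek k a b = ek k b a.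
Proof.
elim: k => [|k IH] /=; first exact: esym.
by rewrite IH; congr (_ || _); rewrite orbC.
Qed.

Lemma ek_e k a b : e a b -> ek k a b.
Proof. by elim: k => [|k IH] //= h; rewrite IH. Qed.

Lemma indep_ek k (f : T -> R) : indep_fun (ek k) f -> indep_fun e f.
Proof. by move=> h a b fa fb; apply/negP => /(ek_e k); apply/negP; apply: h. Qed.

Lemma clamp01 a : 0 <= clamp a <= 1.
Proof.
rewrite /clamp ge_min le_min lexx ler01 /= ?orbT andbT.
by rewrite le_max lexx.
Qed.


Lemma clamp1 a : 1 <= a -> clamp a = 1.
Proof.
move=> h; rewrite /clamp (max_idPr (le_trans ler01 h)); exact: min_idPl.
Qed.

Lemma clamp0 a : a <= 0 -> clamp a = 0.
Proof. by move=> h; rewrite /clamp (max_idPl h) (min_idPr ler01). Qed.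

Lemma clamp_gt0 a : clamp a != 0 -> 0 < a.
Proof.
move=> h; rewrite ltNge; apply/negP => ha; move: h; by rewrite clamp0 // eqxx.
Qed.

Lemma lamt_prev s k : lamt s k.+2 != 0 -> lamt s k.+1 = 1.
Proof.
rewrite /lamt /= => /clamp_gt0 h; apply: clamp1.
rewrite -[k.+1]addn1 natrD in h; lra.
Qed.

Lemma lamt01 s j : 0 <= lamt s j <= 1.
Proof. exact: clamp01. Qed.

Lemma lamt_prev' s k : lamt s k.+1 != 0 -> (k == 0)%N || (lamt s k == 1).
Proof. by case: k => [|k] // /lamt_prev ->; rewrite eqxx. Qed.

Lemma stepf0 x u (f : T -> R) : stepf v 0 x u f = f.
Proof. by apply/funext => z; rewrite /stepf !mul0r addr0. Qed.

Lemma foldf0 (f : T -> R) : foldf v 0 w f = f.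
Proof. by apply/funext => z; rewrite /foldf !mul0r addr0. Qed.

Lemma chain_ok s (f : T -> R) k : (k <= K)%N -> inR f -> indep_fun e f ->
  [/\ inR (chain s k f), indep_fun e (chain s k f) &
      (k == 0)%N || (lamt s k == 1) -> indep_fun (ek k) (chain s k f)].
Proof.
move=> + f0 fi; elim: k => [|k IH] kK; first by split.
have [g0 gi gk] := IH (ltnW kK).
have [s1 s2 s3 s4 s5] := hstep kK.
rewrite /=; set g := chain s k f.
case: (eqVneq (lamt s k.+1) 0) => [l0|l0].
  rewrite l0 stepf0; split => //.
  by rewrite /= eq_sym oner_eq0.
have gk' : indep_fun (ek k) g.
  exact/gk/lamt_prev'.
have [o1 o2 o3] := step_ok (@ek_sym k) (lamt01 s k.+1) s1 s2 s3 s4 s5 g0 gk'.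
split => //; first exact: indep_ek o2.
move=> /= /eqP /o3 h a b ga gb /=.
rewrite !negb_or o2 //=.
apply/andP; split; apply/negP => /andP[/eqP ea /eqP eb]; rewrite ea eb in ga gb.
  all: by move: ga gb; case: h => ->; rewrite eqxx.
Qed.

Lemma full_ok s (f : T -> R) : inR f -> indep_fun e f ->
  inR (full s f) /\ indep_fun e (full s f).
Proof.
move=> f0 fi; have [g0 gi gk] := chain_ok s (leqnn K) f0 fi.
rewrite /full; case: (eqVneq (lamt s K.+1) 0) => [l0|l0].
  by rewrite l0 foldf0.
have gk' : indep_fun (ek K) (chain s K f).
  exact/gk/lamt_prev'.
have [h1 h2 h3] := hfin.
have [o1 o2 _] := fold_ok (@ek_sym K) (lamt01 s K.+1) h1 h2 h3 g0 gk'.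
by split => //; exact: indep_ek o2.
Qed.

Lemma full1v (f : T -> R) : full 1 f v = 0.
Proof.
have [h1 _ _] := hfin.
rewrite /full /lamt /= clamp1; last by rewrite mulr1 -addn1 natrD; lra.
have h1v : v != w by rewrite eq_sym.
by rewrite /foldf eqxx (negbTE h1v) /=; ring.
Qed.

Lemma full0 (f : T -> R) : full 0 f = f.
Proof.
have l0 : forall j, lamt 0 j = 0.
  by move=> j; rewrite /lamt mulr0 sub0r clamp0 // oppr_le0.
rewrite /full l0 foldf0; elim: K => [|k IH] //=.
by rewrite l0 stepf0.
Qed.

Lemma full_id s (f : T -> R) : (forall z, 0 <= f z) -> f v = 0 -> full s f = f.
Proof.
move=> f0 fv.
have ch : forall k, chain s k f = f.
  elim=> [|k IH] //=; rewrite IH; apply/funext => z.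
  by rewrite /stepf fv (min_idPl (f0 _)) mulr0 mul0r addr0.
by rewrite /full ch; apply/funext => z; rewrite /foldf fv mulr0 mul0r addr0.
Qed.

Lemma lamt_cont j : continuous (fun q : R * {ptws T -> R} => lamt q.1 j).
Proof.
rewrite /lamt /clamp.
apply: contMin; first exact: contC.
apply: contMax; first exact: contC.
apply: contB; last exact: contC.
apply: contM; [exact: contC | exact: cont_fst].
Qed.

Lemma chain_cont k z : continuous (fun q : R * {ptws T -> R} => chain q.1 k q.2 z).
Proof.
elim: k z => [|k IH] z /=; first exact: cont_proj2.
rewrite /stepf; apply: contD; first exact: IH.
apply: contM; last exact: contC.
apply: contM; first exact: lamt_cont.
by apply: contMin; apply: IH.
Qed.

Lemma full_cont z : continuous (fun q : R * {ptws T -> R} => full q.1 q.2 z).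
Proof.
rewrite /full /foldf; apply: contD; first exact: chain_cont.
apply: contM; last exact: contC.
apply: contM; first exact: lamt_cont.
exact: chain_cont.
Qed.

Local Notation X := (indep_complex_space R e).
Local Notation T' := {x : T | x != v}.
Local Notation Y := (indep_complex_space R (del_vertex e v)).

Lemma memX (x : X) : inR (set_val x) /\ indep_fun e (set_val x).
Proof. case: x => f hf; apply/realizationP; rewrite set_valE /=; exact: set_mem hf. Qed.

Lemma memY (y : Y) : inR (set_val y) /\ indep_fun (del_vertex e v) (set_val y).
Proof. case: y => f hf; apply/realizationP; rewrite set_valE /=; exact: set_mem hf. Qed.

Lemma full_mem s (x : X) : (full s (set_val x) : {ptws T -> R}) \in realization R (independent e).
Proof.
apply/mem_set/realizationP; have [h1 h2] := memX x; exact: full_ok.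
Qed.

Definition restr (f : T -> R) : {ptws T' -> R} := fun a => f (val a).
Definition extd (g : T' -> R) : {ptws T -> R} := fun z => oapp g 0 (insub z).

Lemma restr_mem (x : X) : restr (full 1 (set_val x)) \in realization R (independent (del_vertex e v)).
Proof.
have [[h0 h1] h2] := full_ok 1 (memX x).1 (memX x).2.
apply/mem_set/realizationP; split; first split.
- by move=> a; rewrite /restr.
- rewrite /restr sum_subv; move: h1; rewrite (bigD1 v) //= full1v add0r //.
- by move=> a b ha hb; rewrite /del_vertex; apply: h2.
Qed.

Lemma extd_nz (g : T' -> R) z : extd g z != 0 -> exists2 a : T', val a = z & g a != 0.
Proof.
rewrite /extd; case: insubP => [a _ <- /= ga|]; last by rewrite /= eqxx.
by exists a.
Qed.

Lemma extd_mem (y : Y) : extd (set_val y) \in realization R (independent e).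
Proof.
have [[h0 h1] h2] := memY y.
apply/mem_set/realizationP; split; first split.
- by move=> z; rewrite /extd; case: insubP => [a _ _ /=|_ /=] //.
- rewrite (bigD1 v) //= {1}/extd insubF ?eqxx //= add0r -sum_subv -h1.
  by apply: eq_bigr => a _; rewrite /extd valK.
- move=> a b /extd_nz [a' <- ha] /extd_nz [b' <- hb].
  exact: h2.
Qed.

Definition Phi (x : X) : Y := exist _ (restr (full 1 (set_val x))) (restr_mem x).
Definition Psi (y : Y) : X := exist _ (extd (set_val y)) (extd_mem y).
Definition Hom (q : R * X) : X := exist _ (full (1 - q.1) (set_val q.2)) (full_mem (1 - q.1) q.2).

Lemma cont_pair (Z : topologicalType) (a : Z -> R) (b : Z -> {ptws T -> R}) :
  continuous a -> continuous b -> continuous (fun z => (a z, b z)).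
Proof. by move=> ca cb z; exact: (cvg_pair (ca z) (cb z)). Qed.

Lemma cont_full_comp (Z : topologicalType) (a : Z -> R) (b : Z -> {ptws T -> R}) z0 :
  continuous a -> continuous b -> continuous (fun z => full (a z) (b z) z0).
Proof.
move=> ca cb x.
apply: (@continuous_comp _ _ _ (fun z => (a z, b z)) (fun q : R * {ptws T -> R} => full q.1 q.2 z0)).
  exact: cont_pair.
exact: full_cont.
Qed.

Lemma Phi_cont : continuous Phi.
Proof.
apply: cont_into; rewrite set_valE /=.
apply: ptws_continuous => a /=; rewrite /restr.
apply: cont_full_comp; [exact: contC | exact: cont_val].
Qed.

Lemma Psi_cont : continuous Psi.
Proof.
apply: cont_into; rewrite set_valE /=.
apply: ptws_continuous => z /=; rewrite /extd.
case: insubP => [a _ _ | _] /=; last exact: contC.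
move=> y; apply: (@continuous_comp _ _ _ set_val (fun f : {ptws T' -> R} => f a)).
  exact: cont_val.
exact: (@proj_continuous T' (fun _ => R) a).
Qed.

Lemma Hom_cont : continuous Hom.
Proof.
apply: cont_into; rewrite set_valE /=.
apply: ptws_continuous => z /=.
apply: cont_full_comp.
  apply: contB; [exact: contC | move=> q; exact: cvg_fst].
move=> q; apply: (@continuous_comp _ _ _ snd set_val); first exact: cvg_snd.
exact: cont_val.
Qed.

Theorem gen_main : homotopy_equivalent R X Y.
Proof.
exists Phi, Psi; split; first exact: Phi_cont.
split; first exact: Psi_cont.
split.
- exists Hom; split; first exact: continuous_subspaceT Hom_cont.
  split => x; apply: val_inj; rewrite /= ?set_valE /=.
    apply/funext => z; rewrite subr0 /extd /restr.
    case: insubP => [a _ <- //|] /=.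
    by rewrite negbK => /eqP ->; rewrite full1v.
  by rewrite subrr full0.
- exists (fun q => q.2); split.
    by apply: continuous_subspaceT => q; exact: cvg_snd.
  split => y //; apply: val_inj; rewrite /= ?set_valE /=.
  apply/funext => a; rewrite /restr full_id.
  + by rewrite /extd valK.
  + by move=> z; rewrite /extd; case: insubP => [b _ _ /=|_ /=] //; have [[]] := memY y.
  + by rewrite /extd insubF ?eqxx.
Qed.
End Chain.
Section Concrete.
Local Open Scope nat_scope.
Variables (N t' : nat).
Local Notation V := (Gvert N.+2 t'.+1).

Definition pv (i : nat) : V :=
  if (i <= N)%N then inr (inord t', inord i, true)
  else if i == N.+1 then inl (inord t'.+1)
  else inr (inord t', inord (2 * N + 2 - i), false).

Definition vv : V := inl (inord t').

Local Notation E := (Gedge N.+2 t'.+1).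

Lemma pv_inr (a : 'I_t'.+1) (j : 'I_N.+1) s : val a = t' ->
  (inr (a, j, s) : V) = pv (if s then val j else 2 * N + 2 - val j).
Proof.
move=> ha; have jN := ltn_ord j; rewrite /pv.
have -> : a = inord t' by apply: val_inj; rewrite /= inordK // ha.
case: s.
  by rewrite -ltnS jN inord_val.
have h1 : (2 * N + 2 - j <= N)%N = false by apply/negbTE; rewrite -ltnNge; lia.
have h2 : (2 * N + 2 - j == N.+1) = false by apply/eqP; lia.
rewrite h1 h2; congr (inr (_, _, _)); apply: val_inj; rewrite /= inordK; lia.
Qed.

Lemma pv_inl (k : 'I_t'.+2) : val k = t'.+1 -> (inl k : V) = pv N.+1.
Proof.
move=> hk; rewrite /pv ltnn eqxx; congr inl; apply: val_inj; by rewrite /= inordK // hk.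
Qed.


Lemma pvE1 i : i <= N -> pv i = inr (inord t', inord i, true).
Proof. by rewrite /pv => ->. Qed.
Lemma pvE2 : pv N.+1 = inl (inord t'.+1).
Proof. by rewrite /pv ltnn eqxx. Qed.
Lemma pvE3 i : N.+1 < i -> pv i = inr (inord t', inord (2 * N + 2 - i), false).
Proof.
move=> h; rewrite /pv; have -> : (i <= N) = false by apply/negbTE; rewrite -ltnNge; lia.
by have -> : (i == N.+1) = false by apply/eqP; lia.
Qed.

Lemma it : (inord t' : 'I_t'.+1) = t' :> nat.
Proof. by rewrite inordK. Qed.
Lemma itv : (inord t' : 'I_t'.+2) = t' :> nat.
Proof. by rewrite inordK // ltnW. Qed.
Lemma it1 : (inord t'.+1 : 'I_t'.+2) = t'.+1 :> nat.
Proof. by rewrite inordK. Qed.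

Ltac fin := first [ by left; congr pv; lia | by right; congr pv; lia ].

Lemma nbr i y : 0 < i <= 2 * N + 1 -> E (pv i) y -> y = pv i.-1 \/ y = pv i.+1.
Proof.
move=> hi.
case: y => [k | [[a j] s]].
- have ka := ltn_ord k.
  case: (leqP i N) => h1; [|case: (eqVneq i N.+1) => [->|h2]].
  + rewrite (pvE1 h1) /Gedge /Gadj /= it inordK //.
    case/orP => /andP [/eqP e1 /eqP e2]; first lia.
    rewrite (pv_inl e1); fin.
  + by rewrite pvE2 /Gedge /Gadj /=.
  + have h3 : N.+1 < i by lia.
    rewrite (pvE3 h3) /Gedge /Gadj /= it inordK; last lia.
    case/orP => /andP [/eqP e1 /eqP e2]; first lia.
    rewrite (pv_inl e1); fin.
- have ha := ltn_ord a; have hj := ltn_ord j.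
  case: (leqP i N) => h1; [|case: (eqVneq i N.+1) => [->|h2]].
  + rewrite (pvE1 h1) /Gedge /Gadj /= it inordK //.
    case/orP => /andP [/eqP es]; subst s.
    * case/orP => [/andP [/eqP e1 /eqP e2]|/andP [/andP [/eqP e1 /eqP e2] /eqP e3]]; last lia.
      rewrite (pv_inr _ _ (esym e1)) /=; fin.
    * case/orP => [/andP [/eqP e1 /eqP e2]|/andP [/andP [/eqP e1 /eqP e2] /eqP e3]]; last lia.
      rewrite (pv_inr _ _ e1) /=; fin.
  + rewrite pvE2 /Gedge /Gadj /= it1 orbF.
    case/orP => /andP [/eqP e1 /eqP e2]; first lia.
    have e1' : (a : nat) = t' by lia.
    rewrite (pv_inr _ _ e1'); case: s; rewrite /=; fin.
  + have h3 : N.+1 < i by lia.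
    rewrite (pvE3 h3) /Gedge /Gadj /= it inordK; last lia.
    case/orP => /andP [/eqP es]; subst s.
    * case/orP => [/andP [/eqP e1 /eqP e2]|/andP [/andP [/eqP e1 /eqP e2] /eqP e3]]; last lia.
      rewrite (pv_inr _ _ (esym e1)) /=; fin.
    * case/orP => [/andP [/eqP e1 /eqP e2]|/andP [/andP [/eqP e1 /eqP e2] /eqP e3]]; last lia.
      rewrite (pv_inr _ _ e1) /=; fin.
Qed.


Lemma Esym a b : E a b = E b a.
Proof. by rewrite /Gedge orbC. Qed.

Lemma Eirr a : ~~ E a a.
Proof.
rewrite /Gedge orbb; case: a => [k|[[a j] s]] //=.
rewrite !eqxx /=; apply/negP; case/orP => [/eqP|/andP [/andP [/eqP h] _] _]; lia.
Qed.

Lemma adj i : i <= 2 * N + 1 -> E (pv i) (pv i.+1).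
Proof.
move=> hi.
case: (ltngtP i N) => h1.
- rewrite (pvE1 (ltnW h1)) (pvE1 h1) /Gedge /Gadj /= it !inordK //; last by rewrite ltnS ltnW.
  lia.
- case: (eqVneq i N.+1) => [->|h2].
    rewrite pvE2 pvE3 // /Gedge /Gadj /= it it1 inordK; lia.
  have h3 : N.+1 < i by lia.
  rewrite (pvE3 h3) pvE3; last lia.
  rewrite /Gedge /Gadj /= it !inordK; lia.
- rewrite h1 (pvE1 (leqnn N)) pvE2 /Gedge /Gadj /= it it1 inordK //.
  lia.
Qed.

Lemma adjv0 : E vv (pv 0).
Proof. rewrite pvE1 // /Gedge /Gadj /vv /= it itv inordK //; lia. Qed.

Lemma adjv2 : E vv (pv (2 * N + 2)).
Proof. rewrite pvE3; last lia. rewrite /Gedge /Gadj /vv /= it itv inordK; lia. Qed.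

Definition dec (y : V) : nat :=
  match y with
  | inl _ => N.+1
  | inr (a, j, s) => if s then val j else 2 * N + 2 - val j
  end.

Lemma decK i : i <= 2 * N + 2 -> dec (pv i) = i.
Proof.
move=> hi; case: (leqP i N) => h1; first by rewrite pvE1 //= inordK.
case: (eqVneq i N.+1) => [->|h2]; first by rewrite pvE2.
have h3 : N.+1 < i by lia.
rewrite pvE3 //= inordK; lia.
Qed.

Lemma pv_inj i j : i <= 2 * N + 2 -> j <= 2 * N + 2 -> pv i = pv j -> i = j.
Proof. by move=> hi hj h; rewrite -(decK hi) -(decK hj) h. Qed.

Lemma pv_nv i : i <= 2 * N + 2 -> pv i != vv.
Proof.
move=> hi; case: (leqP i N) => h1; first by rewrite pvE1.
case: (eqVneq i N.+1) => [->|h2].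
  rewrite pvE2 /vv; apply/negP => /eqP [] /(congr1 val) /=; rewrite !inordK //; lia.
have h3 : N.+1 < i by lia.
by rewrite pvE3.
Qed.

End Concrete.


Theorem lemma3p4 (R : realType) (m t : nat) : (1 <= t)%N ->
  homotopy_equivalent R
    (indep_complex_space R (Gedge (3 * m + 2) t))
    (indep_complex_space R (del_vertex (Gedge (3 * m + 2) t) (Ga (3 * m + 2) t t.-1))).
Proof.
case: t => [//|t'] _.
have -> : (3 * m + 2 = (3 * m).+2)%N by rewrite addn2.
set N := (3 * m)%N.
have hN : N = (3 * m)%N by [].
apply: (@gen_main R _ (Gedge N.+2 t'.+1) (vv N t') (@Esym N t')
   (fun k => pv N t' (3 * k)) (fun k => pv N t' (3 * k - 2)) (2 * m)%N (pv N t' (2 * N + 1))).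
- move=> k hk.
  have -> : (3 * k.+1 - 2 = (3 * k).+1)%N by lia.
  have hu : forall j, (0 < j <= k)%N -> pv N t' (3 * k).+1 != pv N t' (3 * j).
    by move=> j hj; apply/eqP => /pv_inj h; have := h _ _; lia.
  have hv : pv N t' (3 * k).+1 != vv N t' by apply: pv_nv; lia.
  split.
  + exact: hv.
  + by apply/eqP => /pv_inj h; have := h _ _; lia.
  + by apply: pv_nv; lia.
  + apply/negP => /(ek_nv hv hu); apply/negP; exact: Eirr.
  + move=> y /(ek_nv hv hu) Ey.
    have hi : (0 < (3 * k).+1 <= 2 * N + 1)%N by lia.
    case: (nbr hi Ey) => ey.
    * rewrite ey /=; clear Ey hi ey; apply/orP; left.
      case: k hk hu hv => [|k] hk hu hv.
        by rewrite /= adjv0.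
      by apply: ek_vx; lia.
    * apply/orP; right; apply: ek_e; rewrite ey Esym.
      have -> : ((3 * k.+1) = (3 * k).+2.+1)%N by lia.
      by apply: adj; lia.
- have hu : forall j, (0 < j <= 2 * m)%N -> pv N t' (2 * N + 1) != pv N t' (3 * j).
    by move=> j hj; apply/eqP => /pv_inj h; have := h _ _; lia.
  have hv : pv N t' (2 * N + 1) != vv N t' by apply: pv_nv; lia.
  split.
  + exact: hv.
  + apply/negP => /(ek_nv hv hu); apply/negP; exact: Eirr.
  + move=> y /(ek_nv hv hu) Ey.
    have hi : (0 < 2 * N + 1 <= 2 * N + 1)%N by lia.
    case: (nbr hi Ey) => ey.
    * rewrite ey; case: (posnP m) => hm.
        have -> : (2 * N + 1).-1 = 0%N by lia.
        by rewrite ek_e // adjv0.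
      have -> : (2 * N + 1).-1 = (3 * (2 * m))%N by lia.
      by apply: ek_vx; lia.
    * rewrite ey ek_e //.
      have -> : (2 * N + 1).+1 = (2 * N + 2)%N by lia.
      exact: adjv2.
Qed.
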